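(* Let $\psi$ be an additive character of $\mathbb{F}_{q^2}$ of conductor $q^2$. If $\nu$ is any character of $H'$ whose restriction to $H_0'$ equals $\widetilde\psi$, then the representation $\mathrm{Ind}_{H'}^{\mathcal U}(\nu)$ is irreducible.
   Context: Let $p$ be a prime, $q$ a power of $p$, $\ell\ne p$, and $h\ge2$ an integer; representations are over $\overline{\mathbb{Q}}_\ell$. For a commutative $\mathbb{F}_q$-algebra $A$, $U_h^{2,q}(A)$ is the set of formal expressions $1+\sum_{i=1}^{2(h-1)}a_i\tau^i$ ($a_i\in A$) with multiplication obtained by extending $(a\tau^i)(b\tau^j)=ab^{q^i}\tau^{i+j}$ bi-additively, $\tau^0=1$, $\tau^k=0$ for $k>2(h-1)$. In $\mathcal U=U_h^{2,q}(\mathbb{F}_{q^2})$ define $H_0'=\{1+\sum a_i\tau^i: a_i=0\text{ unless } i=2(h-1)\text{ or } i\text{ is odd with } i>h-1\}$; if $h$ is odd, $H'=\{1+\sum a_i\tau^i: a_i=0\text{ for all odd } i\le h-1\}$; if $h$ is even, $H'=\{1+\sum a_i\tau^i: a_i=0\text{ for odd } i<h-1,\ a_{h-1}\in\mathbb{F}_q\}$. An additive character $\psi\colon\mathbb{F}_{q^2}\to\overline{\mathbb{Q}}_\ell^\times$ has conductor $q^2$ if there exists $x$ with $\psi(x^q)\ne\psi(x)$; $\widetilde\psi$ is the character $1+\sum a_i\tau^i\mapsto\psi(a_{2(h-1)})$ of $H_0'$. *)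

(* Defs.v *)
From HB Require Import structures.
From mathcomp Require Import all_boot all_order all_algebra all_fingroup all_solvable all_field all_character.
Set Implicit Arguments. Unset Strict Implicit. Unset Printing Implicit Defensive.
Import GRing.Theory Num.Theory.
Local Open Scope ring_scope.

(* The group U_h^{2,q}(F) for F = F_{q^2}, N = 2(h-1).
   A formal element x = 1 + sum_{i=1}^N a_i tau^i is encoded by its
   coefficient vector a : {ffun 'I_N -> F}, with a i = a_{i+1}.
   It is realized faithfully as the permutation of the finite set
   F^{N+1} = {ffun 'I_N.+1 -> F} (truncated twisted polynomials
   v = sum_{k=0}^N v_k tau^k) given by right multiplication v |-> v * x.
   Since mathcomp's permutation product is (s * t) v = t (s v), right
   multiplication makes x |-> (v |-> v*x) a group homomorphism
   (not an anti-homomorphism).  The map is injective (apply to v = 1). *)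

Section Unipotent.
Variables (F : finFieldType) (q N : nat).

Definition tcoef (a : {ffun 'I_N -> F}) (m : nat) : F :=
  if m is m'.+1 then (if (insub m' : option 'I_N) is Some i then a i else 0)
  else 1.

Definition rmulU (a : {ffun 'I_N -> F}) (v : {ffun 'I_N.+1 -> F})
  : {ffun 'I_N.+1 -> F} :=
  [ffun j : 'I_N.+1 => \sum_(k < j.+1) v (inord k) * (tcoef a (j - k)) ^+ (q ^ k)].

Definition Uset : {set {perm {ffun 'I_N.+1 -> F}}} :=
  [set g : {perm {ffun 'I_N.+1 -> F}} | [exists a : {ffun 'I_N -> F}, [forall v, g v == rmulU a v]]].

Definition one_vec : {ffun 'I_N.+1 -> F} :=
  [ffun k : 'I_N.+1 => if k == ord0 then 1 else 0].

(* coefficient a_j of tau^j (for 1 <= j <= N) of the element encoded by g *)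
Definition coefU (g : {perm {ffun 'I_N.+1 -> F}}) (j : nat) : F :=
  g one_vec (inord j).

End Unipotent.

Definition Nh (h : nat) : nat := (h.-1).*2.

(* the group U = U_h^{2,q}(F_{q^2}) (Uset is already a group; <<_>> only
   provides the group structure) *)
Definition Ugrp (F : finFieldType) (q h : nat) :=
  <<Uset F q (Nh h)>>%G.

Definition H0set (F : finFieldType) (q h : nat) :=
  [set g in Uset F q (Nh h) | [forall j : 'I_(Nh h).+1,
     ((0 < j)%N && ((j : nat) != Nh h) && ~~ (odd j && (h.-1 < j)%N))
       ==> (coefU g j == 0)]].
Definition H0grp (F : finFieldType) (q h : nat) := <<H0set F q h>>%G.

Definition Hset (F : finFieldType) (q h : nat) :=
  [set g in Uset F q (Nh h) |
    if odd h then
      [forall j : 'I_(Nh h).+1, (odd j && (j <= h.-1)%N) ==> (coefU g j == 0)]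
    else
      [forall j : 'I_(Nh h).+1, (odd j && (j < h.-1)%N) ==> (coefU g j == 0)]
      && (coefU g h.-1 ^+ q == coefU g h.-1)].
Definition Hgrp (F : finFieldType) (q h : nat) := <<Hset F q h>>%G.

(* Main.v *)
Require Import Defs.
From HB Require Import structures.
From mathcomp Require Import all_boot all_order all_algebra all_fingroup all_solvable all_field all_character.
From mathcomp Require Import zify ring.
Set Implicit Arguments. Unset Strict Implicit. Unset Printing Implicit Defensive.
Import GRing.Theory Num.Theory.
Local Open Scope ring_scope.

Section Alg.
Variables (F : finFieldType) (q N : nat).
Hypothesis q_gt0 : (0 < q)%N.
Hypothesis frobD : forall m (x y : F), (x + y) ^+ (q ^ m) = x ^+ (q ^ m) + y ^+ (q ^ m).

Local Notation V := {ffun 'I_N.+1 -> F}.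
Local Notation one := (one_vec F N).

Definition tmul (u w : V) : V :=
  [ffun j : 'I_N.+1 => \sum_(k < j.+1) u (inord k) * (w (inord (j - k))) ^+ (q ^ k)].

Definition cf (u : V) (m : nat) : F := u (inord m).

Lemma cfE (u : V) (m : 'I_N.+1) : cf u m = u m.
Proof. by rewrite /cf inord_val. Qed.

Lemma frob0 m : (0 : F) ^+ (q ^ m) = 0.
Proof. by rewrite expr0n expn_eq0 eqn0Ngt q_gt0. Qed.

Lemma frob_sum m (I : Type) (r : seq I) (P : pred I) (G : I -> F) :
  (\sum_(i <- r | P i) G i) ^+ (q ^ m) = \sum_(i <- r | P i) (G i) ^+ (q ^ m).
Proof.
by apply: (big_morph (fun x : F => x ^+ (q ^ m))) => [x y|]; rewrite ?frobD ?frob0.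
Qed.

Lemma tmulE (u w : V) (j : nat) : (j <= N)%N ->
  cf (tmul u w) j = \sum_(0 <= k < j.+1) cf u k * (cf w (j - k)) ^+ (q ^ k).
Proof.
move=> jN; rewrite /cf ffunE inordK // big_mkord.
by [].
Qed.

Lemma tri_exch (G : nat -> nat -> F) n :
  \sum_(0 <= k < n) \sum_(0 <= l < k.+1) G l k =
  \sum_(0 <= l < n) \sum_(0 <= m < n - l) G l (l + m)%N.
Proof.
elim: n => [|n IH]; first by rewrite !big_geq.
rewrite big_nat_recr //= IH [RHS]big_nat_recr //= subSnn big_nat1 ?addn0 /=.
rewrite big_nat_recr //= addrA; congr (_ + _).
rewrite -big_split /=; apply: eq_big_nat => l /andP[_ ln].
  rewrite subSn ?(ltnW ln) // big_nat_recr //=; congr (_ + G l _).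
  by rewrite subnKC // ltnW.
Qed.


Lemma sum_only1 n k0 (G : nat -> F) :
  (forall k, (k < n)%N -> k != k0 -> G k = 0) ->
  \sum_(0 <= k < n) G k = if (k0 < n)%N then G k0 else 0.
Proof.
move=> H; case: ifP => lt.
  rewrite big_mkord (bigD1 (Ordinal lt)) //= big1 ?addr0 // => i ne.
  apply: H => //; apply/eqP => e; move/eqP: ne; apply; exact: val_inj.
rewrite big_nat_cond big1 // => k /andP[/andP[_ kn] _]; apply: H => //.
by apply: contraFneq lt => <-.
Qed.

Lemma cf_ext (u w : V) : (forall j, (j <= N)%N -> cf u j = cf w j) -> u = w.
Proof. by move=> H; apply/ffunP => j; rewrite -!cfE H // -ltnS. Qed.

Lemma cf_one k : (k <= N)%N -> cf one k = if k == 0%N then 1 else 0.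
Proof.
move=> kN; rewrite /cf /one_vec ffunE.
by have -> : (inord k == ord0 :> 'I_N.+1) = (k == 0%N) by rewrite -val_eqE /= inordK.
Qed.

Lemma tmul1l (w : V) : tmul one w = w.
Proof.
apply: cf_ext => j jN; rewrite tmulE // (@sum_only1 _ 0) => [|k kj k0]; last first.
  by rewrite cf_one ?(negPf k0) ?mul0r // -ltnS (leq_trans kj).
by rewrite cf_one // eqxx mul1r expn0 expr1 subn0.
Qed.

Lemma tmul1r (v : V) : tmul v one = v.
Proof.
apply: cf_ext => j jN; rewrite tmulE // (@sum_only1 _ j) => [|k kj kj']; last first.
  rewrite cf_one; last by rewrite (leq_trans (leq_subr _ _)).
  by rewrite subn_eq0 leqNgt ltn_neqAle kj' -ltnS kj /= frob0 mulr0.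
by rewrite ltnSn cf_one ?subnn ?eqxx ?expr1n ?mulr1 // (leq_trans (leq_subr _ _)).
Qed.

Lemma tmulA (u x y : V) : tmul (tmul u x) y = tmul u (tmul x y).
Proof.
apply: cf_ext => j jN; rewrite !tmulE //.
transitivity (\sum_(0 <= k < j.+1) \sum_(0 <= l < k.+1)
   (cf u l * cf x (k - l) ^+ (q ^ l) * cf y (j - k) ^+ (q ^ k))).
  apply: eq_big_nat => k /andP[_ kj]; rewrite tmulE ?mulr_suml //.
  by rewrite -ltnS (leq_trans kj).
rewrite tri_exch; apply: eq_big_nat => l /andP[_ lj].
rewrite tmulE; last by rewrite (leq_trans (leq_subr _ _)).
rewrite frob_sum mulr_sumr subSn; last by rewrite -ltnS.
apply: eq_big_nat => m _.
rewrite addKn subnDA exprMn -exprM -expnD addnC mulrA.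
by [].
Qed.

Definition vecc (a : {ffun 'I_N -> F}) : V := [ffun m : 'I_N.+1 => tcoef a m].

Lemma rmulUE a v : rmulU q a v = tmul v (vecc a).
Proof.
apply/ffunP => j; rewrite !ffunE; apply: eq_bigr => k _; rewrite ffunE inordK //.
by rewrite ltnS (leq_trans (leq_subr _ _)) // -ltnS.
Qed.

Lemma veccK (w : V) : cf w 0 = 1 -> vecc [ffun i : 'I_N => cf w i.+1] = w.
Proof.
move=> w0; apply: cf_ext => [[|m]] mN; rewrite /cf ffunE inordK ?ltnS //= ?w0 //.
case: insubP => [i _ iv|]; first by rewrite ffunE iv.
by rewrite mN.
Qed.

Lemma cf_vecc0 a : cf (vecc a) 0 = 1.
Proof. by rewrite /cf ffunE inordK. Qed.

Definition cv (g : {perm V}) : V := g one.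

Lemma UsetP g : g \in Uset F q N -> forall v, g v = tmul v (cv g).
Proof.
rewrite inE => /existsP[a /forallP H] v.
have E : forall v, g v = tmul v (vecc a) by move=> v'; rewrite (eqP (H v')) rmulUE.
by rewrite /cv !E tmul1l.
Qed.

Lemma cv0 g : g \in Uset F q N -> cf (cv g) 0 = 1.
Proof.
rewrite inE => /existsP[a /forallP H].
by rewrite /cv (eqP (H _)) rmulUE tmul1l cf_vecc0.
Qed.

Lemma Uset_eq g1 g2 : g1 \in Uset F q N -> g2 \in Uset F q N -> cv g1 = cv g2 -> g1 = g2.
Proof. by move=> U1 U2 e; apply/permP => v; rewrite !UsetP // e. Qed.

Lemma cvM s t : t \in Uset F q N -> cv (s * t) = tmul (cv s) (cv t).
Proof. by move=> Ut; rewrite /cv permM UsetP. Qed.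

Lemma tmul0 (u w : V) : cf (tmul u w) 0 = cf u 0 * cf w 0.
Proof. by rewrite tmulE // big_nat1 subn0 expn0 expr1. Qed.

Lemma Uset_mem (g : {perm V}) (w : V) : cf w 0 = 1 -> (forall v, g v = tmul v w) ->
  g \in Uset F q N.
Proof.
move=> w0 H; rewrite inE; apply/existsP; exists [ffun i : 'I_N => cf w i.+1].
by apply/forallP => v; rewrite rmulUE veccK // H.
Qed.

Lemma Uset_group : group_set (Uset F q N).
Proof.
apply/group_setP; split.
  by apply: (@Uset_mem _ one); [rewrite cf_one ?eqxx|move=> v; rewrite perm1 tmul1r].
move=> s t Us Ut; apply: (@Uset_mem _ (tmul (cv s) (cv t))).
  by rewrite tmul0 !cv0 ?mulr1.
by move=> v; rewrite permM !UsetP // tmulA.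
Qed.

Lemma tmul_inj (w : V) : cf w 0 = 1 -> injective (fun v => tmul v w).
Proof.
move=> w0 v1 v2 /= e; apply: cf_ext => j; elim/ltn_ind: j => j IH jN.
have := congr1 (fun u => cf u j) e; rewrite /= !tmulE // !big_nat_recr //= subnn w0 expr1n !mulr1.
rewrite (@eq_big_nat _ _ _ _ _ _ (fun k => cf v2 k * cf w (j - k) ^+ (q ^ k))); first exact: addrI.
by move=> k /andP[_ kj]; rewrite IH // (leq_trans (ltnW kj)).
Qed.

Definition mkU (w : V) (w0 : cf w 0 = 1) : {perm V} := perm (tmul_inj w0).

Lemma mkUE w w0 v : @mkU w w0 v = tmul v w.
Proof. by rewrite permE. Qed.

Lemma mkU_U w w0 : @mkU w w0 \in Uset F q N.
Proof. by apply: (Uset_mem w0) => v; rewrite mkUE. Qed.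

Lemma cv_mkU w w0 : cv (@mkU w w0) = w.
Proof. by rewrite /cv mkUE tmul1l. Qed.

Lemma coefU_cv (g : {perm V}) j : coefU g j = cf (cv g) j.
Proof. by []. Qed.

Definition mono (j : nat) (c : F) : V :=
  [ffun m : 'I_N.+1 => if (m : nat) == 0%N then 1 else if (m : nat) == j then c else 0].

Lemma cf_mono j c k : (0 < j)%N -> (k <= N)%N ->
  cf (mono j c) k = (if k == 0%N then 1 else 0) + (if k == j then c else 0).
Proof.
move=> j0 kN; rewrite /cf ffunE inordK //.
case: eqP => [->|]; first by rewrite eq_sym (negPf (lt0n_neq0 j0)) addr0.
by rewrite add0r.
Qed.

Lemma cf_mono0 j c : (0 < j)%N -> cf (mono j c) 0 = 1.
Proof. by move=> j0; rewrite cf_mono // eqxx eq_sym (negPf (lt0n_neq0 j0)) addr0. Qed.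

Lemma frob_if (b : bool) (x : F) m : (if b then x else 0) ^+ (q ^ m) = if b then x ^+ (q ^ m) else 0.
Proof. by case: b; rewrite ?frob0. Qed.

Lemma tmul_mono_r (u : V) j c m : (0 < j)%N -> (m <= N)%N ->
  cf (tmul u (mono j c)) m =
  cf u m + (if (j <= m)%N then cf u (m - j) * c ^+ (q ^ (m - j)) else 0).
Proof.
move=> j0 mN; rewrite tmulE //.
rewrite (eq_big_nat _ _ (F2 := fun k => (if k == m then cf u k else 0) +
   (if ((m - k)%N == j) then cf u k * c ^+ (q ^ k) else 0))); last first.
  move=> k /andP[_ km]; rewrite cf_mono ?(leq_trans (leq_subr _ _)) //.
  rewrite frobD !frob_if expr1n mulrDr; congr (_ + _).
    by rewrite subn_eq0 [k == m]eqn_leq -[(k <= m)%N]ltnS km /=; case: ifP; rewrite ?mulr1 ?mulr0.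
  by case: eqP; rewrite ?mulr0.
rewrite big_split /= (@sum_only1 _ m) => [|k _ /negPf ->] //; rewrite ltnSn eqxx; congr (_ + _).
case: leqP => jm.
  rewrite (@sum_only1 _ (m - j)%N) => [|k km]; last first.
    move=> kne; case: eqP => // e; case/eqP: kne; by rewrite -e subKn // -ltnS.
  by rewrite ltnS leq_subr subKn // eqxx.
rewrite big_nat_cond big1 // => k /andP[/andP[_ km] _].
by case: eqP => // e; move: jm; rewrite -e ltnNge leq_subr.
Qed.

Lemma tmul_mono_l (u : V) j c m : (0 < j)%N -> (m <= N)%N ->
  cf (tmul (mono j c) u) m =
  cf u m + (if (j <= m)%N then c * cf u (m - j) ^+ (q ^ j) else 0).
Proof.
move=> j0 mN; rewrite tmulE //.
rewrite (eq_big_nat _ _ (F2 := fun k => (if k == 0%N then cf u m else 0) +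
   (if k == j then c * cf u (m - j) ^+ (q ^ j) else 0))); last first.
  move=> k /andP[_ km]; rewrite cf_mono ?(leq_trans _ mN) // -?ltnS // mulrDl.
  congr (_ + _); first by case: eqP => [->|]; rewrite ?mul0r // mul1r subn0 expr1.
  by case: eqP => [->|]; rewrite ?mul0r.
rewrite big_split /= (@sum_only1 _ 0) => [|k _ /negPf ->] //; rewrite ltnS leq0n eqxx.
congr (_ + _); rewrite (@sum_only1 _ j) => [|k _ /negPf ->] //.
by rewrite ltnS eqxx.
Qed.

Lemma conj_ident (x : V) i c : (0 < i)%N -> (i < N)%N -> cf x 0 = 1 ->
  (forall k, (0 < k < i)%N -> cf x k = 0) ->
  tmul x (mono (N - i) c) =
  tmul (mono (N - i) c)
    (tmul (mono N (cf x i * c ^+ (q ^ i) - c * cf x i ^+ (q ^ (N - i)))) x).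
Proof.
move=> i0 iN x0 xz; set j := (N - i)%N; set d := _ - _.
have j0 : (0 < j)%N by rewrite subn_gt0.
have jE : j = (N - i)%N by [].
clearbody j.
have N0 : (0 < N)%N by apply: leq_trans iN.
apply: cf_ext => m mN; rewrite tmul_mono_r // tmul_mono_l // tmul_mono_l //.
case: (leqP j m) => jm; last first.
  by rewrite ifN ?addr0 // -ltnNge; lia.
rewrite tmul_mono_l //; last by lia.
have nle : ~~ (N <= m - j)%N by rewrite -ltnNge; lia.
rewrite (ifN _ _ nle) addr0.
rewrite -addrA; congr (_ + _).
case: (posnP (m - j)) => [t0|tp].
  rewrite ifN; last by rewrite -ltnNge; lia.
  by rewrite t0 x0 expn0 expr1 expr1n mulr1 mul1r add0r.
case: (ltngtP (m - j) i) => ti.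
- rewrite ifN; last by rewrite -ltnNge; lia.
  by rewrite xz ?tp // frob0 mulr0 mul0r add0r.
- lia.
rewrite ifT; last by lia.
have -> : (m - N = 0)%N by lia.
rewrite ti x0 expr1n mulr1 /d; ring.
Qed.

Definition trunc (x : V) (i : nat) : V :=
  [ffun m : 'I_N.+1 => if ((m : nat) < i)%N then x m else 0].

Lemma cf_trunc x i k : (k <= N)%N -> cf (trunc x i) k = if (k < i)%N then cf x k else 0.
Proof. by move=> kN; rewrite /cf ffunE inordK. Qed.

Lemma trunc_inv (x x' : V) i : (i <= N)%N -> (0 < i)%N -> cf x 0 = 1 -> cf x' 0 = 1 ->
  tmul (trunc x i) x' = x ->
  (forall k, (0 < k < i)%N -> cf x' k = 0) /\ cf x' i = cf x i.
Proof.
move=> iN i0 x0 x'0 e.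
suff H : forall m, (0 < m <= i)%N -> cf x' m = if (m < i)%N then 0 else cf x i.
  split; first by move=> k /andP[k0 ki]; rewrite H ?ki //; lia.
  by rewrite H ?ltnn //; lia.
elim/ltn_ind=> m IH /andP[m0 mi].
have mN : (m <= N)%N by apply: leq_trans iN.
have := congr1 (fun u => cf u m) e; rewrite /= tmulE // big_nat_recr //= big_ltn //=.
rewrite subnn x'0 expr1n mulr1 cf_trunc // subn0 expn0 expr1 cf_trunc // i0 x0 mul1r.
rewrite big_nat_cond big1 ?addr0; last first.
  move=> k /andP[/andP[k1 km] _]; rewrite IH; last 2 first.
  - by rewrite ltn_subrL k1.
  - by apply/andP; split; lia.
  by rewrite ifT ?frob0 ?mulr0 //; lia.
case: ifP => mi' e'.
  by apply: (addIr (cf x m)); rewrite e' add0r.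
have -> : i = m by move/negbT: mi'; lia.
by rewrite -e' addr0.
Qed.

End Alg.
Lemma lin_norm1 (gT : finGroupType) (H : {group gT}) (nu : 'CF(H)) x :
  nu \is a linear_char -> x \in H -> nu x * (nu x)^* = 1.
Proof.
by move=> lin Hx; rewrite -lin_charV_conj // lin_charV // divff // lin_char_neq0.
Qed.

Lemma ind_irr_crit (gT : finGroupType) (G H : {group gT}) (nu : 'CF(H)) :
  H \subset G -> nu \is a linear_char ->
  (forall y, y \in G -> y \notin H ->
     exists a, [/\ a \in H, (a ^ y)%g \in H & nu (a ^ y)%g != nu a]) ->
  'Ind[G] nu \in irr G.
Proof.
move=> sHG lin key; rewrite irrEchar cfInd_char ?lin_charW //=; apply/eqP.
rewrite -Frobenius_reciprocity cfdotC.
suff -> : '['Res[H] ('Ind[G] nu), nu] = 1 by rewrite rmorph1.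
set S := fun y => \sum_(x in H) nu (x ^ y)%g * (nu x)^*.
have SH : forall y, y \in H -> S y = #|H|%:R.
  move=> y Hy; rewrite /S (eq_bigr (fun _ => 1)) ?sumr_const // => x Hx.
  by rewrite cfunJ // lin_norm1.
have SnH : forall y, y \in G -> y \notin H -> S y = 0.
  move=> y Gy nHy; have [a [Ha Hay ne]] := key y Gy nHy.
  set lam := nu (a ^ y)%g * (nu a)^*.
  have e : S y * lam = S y.
    rewrite /S mulr_suml [RHS](reindex_inj (mulIg a)) /=.
    apply: eq_big => [x|x Hx]; first by rewrite groupMr.
    rewrite conjMg [nu (x * a)%g]lin_charM // rmorphM /lam /=.
    case Hxy: ((x ^ y)%g \in H); first by rewrite (lin_charM lin Hxy Hay); ring.
    have nH : (x ^ y * a ^ y)%g \notin H by rewrite groupMr // Hxy.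
    by rewrite (cfun0 _ (negbT Hxy)) (cfun0 _ nH) !mul0r.
  have lam1 : lam != 1.
    apply: contra ne => /eqP l1; apply/eqP.
    by rewrite -[RHS]mulr1 -l1 /lam mulrCA lin_norm1 // mulr1.
  apply/eqP; move/eqP: e; rewrite -subr_eq0 -{2}[S y]mulr1 -mulrBr mulf_eq0.
  by rewrite subr_eq0 eq_sym (negPf lam1) orbF.
have HG : #|H|%:R != 0 :> algC by rewrite pnatr_eq0 -lt0n cardG_gt0.
rewrite cfdotE.
transitivity (#|H|%:R^-1 * (#|H|%:R^-1 * \sum_(y in G) S y)).
  congr (_ * _); rewrite /S exchange_big /= mulr_sumr; apply: eq_bigr => x Hx.
  by rewrite cfResE // cfIndE // -mulrA mulr_suml.
rewrite (big_setID H) /= (setIidPr sHG) [X in _ + X]big1 ?addr0; last first.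
  by move=> y; rewrite inE => /andP[nHy Gy]; rewrite SnH.
rewrite (eq_bigr (fun _ => #|H|%:R)) ?sumr_const; last by move=> y; apply: SH.
by rewrite -[X in _ * (_ * X)]mulr_natr mulKf // mulVf.
Qed.


Section Key.
Variables (F : finFieldType) (q h : nat).
Hypothesis q_gt0 : (0 < q)%N.
Hypothesis frobD : forall m (x y : F), (x + y) ^+ (q ^ m) = x ^+ (q ^ m) + y ^+ (q ^ m).
Hypothesis frob2 : forall y : F, y ^+ (q ^ 2) = y.
Hypothesis h_ge2 : (2 <= h)%N.
Variables (psi : F -> algC) (w0 : F).
Hypothesis psi_add : forall x y : F, psi (x + y) = psi x * psi y.
Hypothesis hw0 : psi (w0 ^+ q) != psi w0.

Local Notation N := (Nh h).
Local Notation n := (h.-1).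
Local Notation V := {ffun 'I_N.+1 -> F}.

Lemma frob_even m (y : F) : y ^+ (q ^ (m.*2)) = y.
Proof.
elim: m => [|m IH]; first by rewrite expn0 expr1.
by rewrite doubleS -addn2 expnD exprM IH frob2.
Qed.

Lemma frob_odd m (y : F) : odd m -> y ^+ (q ^ m) = y ^+ q.
Proof.
move=> om; rewrite -[m]odd_double_half om addnC expnD exprM frob_even expn1.
by [].
Qed.

Lemma frobN (y : F) : (- y) ^+ q = - (y ^+ q).
Proof.
apply/eqP; rewrite -subr_eq0 opprK -[q]expn1 -frobD addNr expr0n.
by rewrite expn1 eqn0Ngt q_gt0.
Qed.

Lemma frobB (x y : F) : (x - y) ^+ q = x ^+ q - y ^+ q.
Proof. by rewrite -[q]expn1 frobD expn1 frobN. Qed.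

Lemma psi_d : psi (w0 ^+ q - w0) != 1.
Proof.
apply: contra hw0 => /eqP e; apply/eqP.
by rewrite -[w0 ^+ q](subrK w0) psi_add e mul1r.
Qed.

Lemma coefU_mkU (w : V) (w1 : cf w 0 = 1) k : coefU (mkU q w1) k = cf w k.
Proof. by rewrite coefU_cv cv_mkU. Qed.

Lemma key_struct (g : {perm V}) : g \in Uset F q N -> g \notin Hset F q h ->
  exists hh A Z g', [/\ hh \in Hset F q h, A \in Hset F q h, Z \in H0set F q h,
     psi (coefU Z N) != 1 & [/\ g' \in Uset F q N, g = (hh * g')%g
         & (g' * A = A * Z * g')%g]].
Proof.
move=> Ug nHg.
pose UG := Group (@Uset_group F q N q_gt0 frobD).
have UGE : forall u, (u \in UG) = (u \in Uset F q N) by [].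
set x := cv g; have x0 : cf x 0 = 1 := cv0 Ug.
have n1 : (1 <= n)%N by lia.
have NE : N = (n + n)%N by rewrite /Nh addnn.
have nltN : (n < N)%N by lia.
have nN : (n <= N)%N by lia.
have N0 : (0 < N)%N by apply: leq_trans nltN.
have ohn : odd h = ~~ odd n by rewrite -[h]prednK ?(ltnW h_ge2) //= ?negbK; lia.
pose bad k := [&& (0 < k)%N, (k <= N)%N &
   if odd h then odd k && (k <= n)%N && (cf x k != 0)
   else (odd k && (k < n)%N && (cf x k != 0)) || ((k == n) && (cf x n ^+ q != cf x n))].
have exb : exists k, bad k.
  move: nHg; rewrite inE Ug /=; case: ifP => oh.
    rewrite negb_forall => /existsP[j]; rewrite negb_imply => /andP[/andP[oj jn] nz].
    have jN : (j <= N)%N by rewrite -ltnS ltn_ord.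
    exists j; rewrite /bad oh oj jn jN /=.
    by rewrite nz andbT lt0n; apply: contraTneq oj => ->.
  rewrite negb_and negb_forall => /orP[/existsP[j]|nq].
    rewrite negb_imply => /andP[/andP[oj jn] nz]; exists j.
    have jN : (j <= N)%N by rewrite -ltnS ltn_ord.
    rewrite /bad oh oj jn jN /= nz /= andbT lt0n.
    by apply: contraTneq oj => ->.
  by exists n; rewrite /bad oh eqxx nq orbT andbT n1 nN.
case: (ex_minnP exb) => i bi imin.
have [i0 iN] : (0 < i)%N /\ (i <= N)%N by case/and3P: bi => -> ->.
have nb : forall k, (k < i)%N -> ~~ bad k.
  by move=> k ki; apply: contraTN ki => /imin; rewrite -leqNgt.
have [oi iln b0 icase] : [/\ odd i, (i <= n)%N, cf x i != 0 &
    (i < n)%N || [&& i == n, ~~ odd h & cf x n ^+ q != cf x n]].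
  case/and3P: bi => _ _; case oh: (odd h) => /=.
    case/andP => /andP[oi iln] nz; split => //.
    apply/orP; left; rewrite ltn_neqAle iln andbT; apply: contraTneq oi => ->.
    by rewrite -ohn oh.
  case/orP => [/andP[/andP[oi iln] nz] | /andP[/eqP ein nq]].
    by split => //; [exact: ltnW | rewrite iln].
  subst i; split => //; first by rewrite -[odd n]negbK -ohn oh.
    by apply: contraNneq nq => ->; rewrite expr0n eqn0Ngt q_gt0.
  by rewrite eqxx nq orbT.
have iltN : (i < N)%N by apply: leq_ltn_trans nltN.
have t0 : cf (trunc x i) 0 = 1 by rewrite cf_trunc // i0 x0.
set hh := mkU q t0.
have Hhh : hh \in Hset F q h.
  have Uhh0 : hh \in Uset F q N by apply: mkU_U.
  rewrite inE Uhh0 /=; case oh: (odd h).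
    apply/forallP => k; apply/implyP => /andP[ok kn].
    have kN : (k <= N)%N by rewrite -ltnS ltn_ord.
    rewrite coefU_mkU cf_trunc //; case: ifP => ki //.
    apply: contraNT (nb k ki) => nz; rewrite /bad oh ok kn nz kN /= andbT.
    by rewrite lt0n; apply: contraTneq ok => ->.
  apply/andP; split.
    apply/forallP => k; apply/implyP => /andP[ok kn].
    have kN : (k <= N)%N by rewrite -ltnS ltn_ord.
    rewrite coefU_mkU cf_trunc //; case: ifP => ki //.
    apply: contraNT (nb k ki) => nz; rewrite /bad oh ok kn nz kN /= andbT.
    by rewrite lt0n; apply: contraTneq ok => ->.
  by rewrite coefU_mkU cf_trunc // ltnNge iln /= expr0n eqn0Ngt q_gt0.
set g' := (hh^-1 * g)%g.
have Uhh : hh \in Uset F q N by apply: mkU_U.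
have Ug' : g' \in Uset F q N by rewrite -UGE groupM ?groupV // UGE.
have eg : g = (hh * g')%g by rewrite /g' mulKVg.
clearbody g'.
have ex : tmul q (trunc x i) (cv g') = x.
  by rewrite -(@cv_mkU _ q _ _ t0) -/hh -cvM // -eg.
have [x'z x'i] := trunc_inv q_gt0 iN i0 x0 (cv0 Ug') ex.
set b := cf x i.
pose c := if (i < n)%N then w0 / b ^+ q else (w0 ^+ q - w0) / (b - b ^+ q).
have jpos : (0 < N - i)%N by rewrite subn_gt0.
have oj : odd (N - i) by rewrite oddB ?(ltnW iltN) // /Nh odd_double oi.
pose d := b * c ^+ (q ^ i) - c * b ^+ (q ^ (N - i)).
have qq : forall y : F, (y ^+ q) ^+ q = y by move=> y; rewrite -exprM mulnn frob2.
have cq : i = n -> c ^+ q = c.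
  move=> ein; move: icase; rewrite ein ltnn /= => /and3P[_ _ nq].
  rewrite -ein -/b in nq.
  rewrite /c ein ltnn exprMn exprVn !frobB !qq.
  by rewrite -[w0 - w0 ^+ q]opprB -[b ^+ q - b]opprB invrN mulrNN.
have dE : d = w0 ^+ q - w0.
  rewrite /d !frob_odd //; case: (ltnP i n) => [ilt|ige].
    have bq : b ^+ q != 0 by rewrite expf_neq0.
    rewrite /c ilt exprMn exprVn qq.
    by rewrite mulrCA mulfV // mulr1 mulfVK.
  have ein : i = n by apply/eqP; rewrite eqn_leq iln ige.
  move: icase; rewrite ltnNge ige /= => /and3P[_ _ nq].
  rewrite -ein -/b in nq.
  have bb : b - b ^+ q != 0 by rewrite subr_eq0 eq_sym.
  rewrite cq // [b * c]mulrC -mulrBr /c ifN -?leqNgt //.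
  by rewrite mulfVK.
have A1 : cf (mono N (N - i) c) 0 = 1 by apply: cf_mono0.
have Z1 : cf (mono N N d) 0 = 1 by apply: cf_mono0.
set A := mkU q A1; set Z := mkU q Z1.
have UA : A \in Uset F q N by apply: mkU_U.
have UZ : Z \in Uset F q N by apply: mkU_U.
exists hh, A, Z, g'; split => //.
- rewrite inE UA /=; case oh: (odd h).
    have ilt : (i < n)%N by move: icase; rewrite oh /= andbF orbF.
    apply/forallP => k; apply/implyP => /andP[ok kn].
    have kN : (k <= N)%N by rewrite -ltnS ltn_ord.
    rewrite coefU_mkU cf_mono //.
    have -> : ((k : nat) == 0%N) = false by apply/negbTE; apply: contraTneq ok => ->.
    have -> : ((k : nat) == N - i)%N = false by apply/negbTE; apply/eqP => e; clear -e kn ilt NE; lia.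
    by rewrite addr0.
  apply/andP; split.
    apply/forallP => k; apply/implyP => /andP[ok kn].
    have kN : (k <= N)%N by rewrite -ltnS ltn_ord.
    rewrite coefU_mkU cf_mono //.
    have -> : ((k : nat) == 0%N) = false by apply/negbTE; apply: contraTneq ok => ->.
    have -> : ((k : nat) == N - i)%N = false by apply/negbTE; apply/eqP => e; clear -e kn iln NE; lia.
    by rewrite addr0.
  rewrite coefU_mkU cf_mono // eqn0Ngt n1 /= add0r.
  case: (ltnP i n) => [ilt|ige].
    have -> : (n == N - i)%N = false by apply/negbTE; apply/eqP => e; clear -e ilt NE; lia.
    by rewrite expr0n eqn0Ngt q_gt0.
  have ein : i = n by apply/eqP; rewrite eqn_leq iln ige.
  have -> : (n == N - i)%N by apply/eqP; clear -ein NE; lia.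
  by rewrite cq.
- rewrite inE UZ /=; apply/forallP => k; apply/implyP => /andP[/andP[k0 kNn] _].
  have kN : (k <= N)%N by rewrite -ltnS ltn_ord.
  by rewrite coefU_mkU cf_mono // eqn0Ngt k0 (negbTE kNn) addr0.
- by rewrite coefU_mkU cf_mono // eqxx eqn0Ngt N0 add0r dE psi_d.
split => //; apply: (@Uset_eq _ q); first by rewrite -UGE groupM ?UGE.
  by rewrite -UGE !groupM ?UGE ?mkU_U.
rewrite (cvM _ UA) (cvM _ Ug') (cvM _ UZ) !(@cv_mkU _ q) tmulA //.
rewrite (conj_ident q_gt0 frobD c i0 iltN (cv0 Ug') x'z) x'i.
by [].
Qed.


End Key.

Theorem corollary2p4 (p k : nat) (F : finFieldType) (h : nat)
  (pr_p : prime p) (k_gt0 : (0 < k)%N) (cardF : #|F| = ((p ^ k) ^ 2)%N)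
  (h_ge2 : (2 <= h)%N)
  (psi : F -> algC)
  (psi_add : forall x y : F, psi (x + y) = psi x * psi y)
  (psi_nz : forall x : F, psi x != 0)
  (psi_cond : exists x : F, psi (x ^+ (p ^ k)) != psi x)
  (nu : 'CF(Hgrp F (p ^ k) h))
  (nu_char : nu \is a character)
  (nu_res : forall x, x \in H0grp F (p ^ k) h ->
     ('Res[H0grp F (p ^ k) h] nu) x = psi (coefU x (Nh h))) :
  'Ind[Ugrp F (p ^ k) h] nu \in irr (Ugrp F (p ^ k) h).
Proof.
pose q := (p ^ k)%N.
have q_gt0 : (0 < q)%N by rewrite expn_gt0 prime_gt0.
have pF : p \in [pchar F] by apply: (@card_finPcharP F p (k * 2)); rewrite // cardF -expnM.
have frobD : forall m (x y : F), (x + y) ^+ (q ^ m) = x ^+ (q ^ m) + y ^+ (q ^ m).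
  move=> m x y; apply: exprDn_pchar.
  by rewrite -expnM (eq_pnat _ (pcharf_eq pF)) pnatX pnat_id.
have frob2 : forall y : F, y ^+ (q ^ 2) = y by move=> y; rewrite -cardF expf_card.
have [w0 hw0] := psi_cond.
have UsetG := @Uset_group F q (Nh h) q_gt0 frobD.
have UE : (Ugrp F q h : {set _}) = Uset F q (Nh h) by rewrite /Ugrp /= gen_set_id.
have sHU : Hgrp F q h \subset Ugrp F q h.
  by apply: genS; apply/subsetP => x; rewrite inE => /andP[].
have n1 : (1 <= h.-1)%N by lia.
have nltN : (h.-1 < Nh h)%N by rewrite /Nh -addnn; lia.
have sH0H : H0grp F q h \subset Hgrp F q h.
  apply: genS; apply/subsetP => x; rewrite inE => /andP[Ux Hx].
  have cz : forall j : 'I_(Nh h).+1, (0 < j)%N -> (j <= h.-1)%N -> coefU x j = 0.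
    move=> j j0 jn; have /implyP H := forallP Hx j; apply/eqP; apply: H.
    rewrite [(h.-1 < j)%N]ltnNge jn andbF andbT j0 /=.
    by apply: contraTneq jn => ->; rewrite -ltnNge.
  have odd0 : forall j : nat, odd j -> (0 < j)%N by case.
  rewrite inE Ux /=; case: ifP => _.
    by apply/forallP => j; apply/implyP => /andP[oj jn]; rewrite cz ?odd0.
  apply/andP; split.
    by apply/forallP => j; apply/implyP => /andP[oj jn]; rewrite cz ?odd0 // ltnW.
  have nN1 : (h.-1 < (Nh h).+1)%N by apply: ltnW; rewrite ltnS.
  by rewrite (cz (Ordinal nN1)) // expr0n eqn0Ngt q_gt0.
have psi0 : psi 0 = 1.
  by apply: (mulfI (psi_nz 0)); rewrite mulr1 -psi_add addr0.
have nuE : forall x, x \in H0grp F q h -> nu x = psi (coefU x (Nh h)).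
  by move=> x Hx; rewrite -nu_res // cfResE.
have lin : nu \is a linear_char.
  apply/andP; split => //; apply/eqP; rewrite nuE ?group1 //.
  rewrite /coefU perm1 /one_vec ffunE.
  have -> : (inord (Nh h) == ord0 :> 'I_(Nh h).+1) = false.
    by rewrite -val_eqE /= inordK // eqn0Ngt; rewrite (leq_ltn_trans _ nltN).
  by rewrite psi0.
apply: (ind_irr_crit sHU lin) => y Uy nHy.
have Ug : y^-1%g \in Uset F q (Nh h) by rewrite -UE groupV.
have nHg : y^-1%g \notin Hset F q h.
  by apply: contra nHy => Hg; rewrite -[y]invgK groupV mem_gen.
have [hh [A [Z [g' [Hhh HA HZ pZ [Ug' eg e']]]]]] :=
  key_struct q_gt0 frobD frob2 h_ge2 psi_add hw0 Ug nHg.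
have AyE : (A ^ y = (A * Z) ^ hh^-1)%g.
  have yE : y = (hh * g')^-1%g by rewrite -eg invgK.
  rewrite /conjg invgK yE invgK invMg !mulgA.
  by rewrite -(mulgA hh g' A) e' !mulgA mulgK.

have HZ' : Z \in H0grp F q h by apply: mem_gen.
have HZ'' : Z \in Hgrp F q h by apply: (subsetP sH0H).
have HA' : A \in Hgrp F q h by apply: mem_gen.
have Hh' : hh^-1%g \in Hgrp F q h by rewrite groupV mem_gen.
exists A; split => //.
  by rewrite AyE groupJ // groupM.
rewrite AyE cfunJ // lin_charM // [nu Z]nuE //.
apply: contra pZ => /eqP e; apply/eqP.
by apply: (mulfI (lin_char_neq0 lin HA')); rewrite mulr1.
Qed.
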